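(* Let $\pi$ be an $r$-homogeneous strongly log-concave distribution with associated matroid $\mathcal{M}$, let $2\le k\le r$, let $f^{(k)}:\mathcal{M}(k)\to\mathbb{R}_{\ge0}$, and let $f^{(k-1)}=P^{\uparrow}_{k-1}f^{(k)}$, i.e. $f^{(k-1)}(J)=\sum_{I\in\mathcal{M}(k),I\supset J}\frac{w(I)}{w(J)}f^{(k)}(I)$ for $J\in\mathcal{M}(k-1)$. Then $$\mathrm{Ent}_{\pi_k}(f^{(k)})\ge\frac{k}{k-1}\,\mathrm{Ent}_{\pi_{k-1}}(f^{(k-1)}).$$
   Context: $\pi:2^{[n]}\to\mathbb{R}_{\ge0}$ has generating polynomial $g_\pi(x)=\sum_S\pi(S)\prod_{i\in S}x_i$; $r$-homogeneous means the support consists of $r$-sets; strongly log-concave means for every $J\subseteq[n]$, $\nabla^2\log(\partial_J g_\pi)$ is negative semidefinite at the all-ones vector. The support $\mathcal{B}$ is the set of bases of a rank-$r$ matroid $\mathcal{M}=(E,\mathcal{I})$; $\mathcal{M}(k)$ = independent sets of size $k$. Weights: $w(I)=(r-|I|)!\sum_{B\in\mathcal{B},B\supseteq I}\pi(B)$ for $I\in\mathcal{I}$; $\pi_k(I)=w(I)/\sum_{I'\in\mathcal{M}(k)}w(I')$ on $\mathcal{M}(k)$. $\mathrm{Ent}_\mu(f)=\mathbb{E}_\mu(f\log f)-\mathbb{E}_\mu f\log\mathbb{E}_\mu f$ with $0\log0=0$. *)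

(* Defs.v *)
From mathcomp Require Import all_boot all_order all_algebra.
From mathcomp Require Import reals exp.
From mathcomp Require Import mpoly.
Set Implicit Arguments. Unset Strict Implicit. Unset Printing Implicit Defensive.
Import Order.TTheory GRing.Theory Num.Theory.
Local Open Scope ring_scope.

Section SLC.
Variables (R : realType) (n : nat).
Implicit Types (pi : {set 'I_n} -> R) (S I J : {set 'I_n}).

Definition gen_poly pi : mpoly.mpoly n R :=
  \sum_(S : {set 'I_n}) pi S *: \prod_(i in S) @mpoly.mpolyX n R (mpoly.mnm1 i).

Definition partialJ J (p : mpoly.mpoly n R) : mpoly.mpoly n R :=
  foldr (fun i q => mpoly.mderiv i q) p (enum J).

Definition ev1 (p : mpoly.mpoly n R) : R := mpoly.meval (fun _ : 'I_n => (1 : R)) p.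

(* entry (i,j) of the Hessian of log p at the all-ones vector:
   d_i d_j log p = (d_i d_j p)/p - (d_i p)(d_j p)/p^2 *)
Definition hess_log1 (p : mpoly.mpoly n R) (i j : 'I_n) : R :=
  ev1 (mpoly.mderiv i (mpoly.mderiv j p)) / ev1 p
  - ev1 (mpoly.mderiv i p) * ev1 (mpoly.mderiv j p) / (ev1 p) ^+ 2.

Definition nsd (H : 'I_n -> 'I_n -> R) : Prop :=
  forall v : 'I_n -> R, \sum_i \sum_j v i * v j * H i j <= 0.

(* strongly log-concave: for all J, Hessian of log (d_J g) is NSD at 1
   (whenever d_J g does not vanish there, so that log is defined) *)
Definition strongly_log_concave pi : Prop :=
  forall J, 0 < ev1 (partialJ J (gen_poly pi)) ->
    nsd (hess_log1 (partialJ J (gen_poly pi))).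

Definition is_distribution pi : Prop :=
  (forall S, 0 <= pi S) /\ \sum_S pi S = 1.

Definition homogeneous (r : nat) pi : Prop :=
  forall S, pi S != 0 -> #|S| = r.

(* associated matroid: bases = support of pi; independent = subset of a basis *)
Definition indep pi I : bool := [exists B : {set 'I_n}, (0 < pi B) && (I \subset B)].

Definition Mk pi (k : nat) : {set {set 'I_n}} := [set I | indep pi I & #|I| == k].

Definition wgt (r : nat) pi I : R :=
  (r - #|I|)`!%:R * \sum_(B : {set 'I_n} | I \subset B) pi B.

Definition pik (r : nat) pi (k : nat) (I : {set 'I_n}) : R :=
  wgt r pi I / \sum_(I' in Mk pi k) wgt r pi I'.

Definition xlogx (x : R) : R := if x == 0 then 0 else x * ln x.

Definition Ent (A : {set {set 'I_n}}) (mu f : {set 'I_n} -> R) : R :=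
  \sum_(I in A) mu I * xlogx (f I) - xlogx (\sum_(I in A) mu I * f I).

Definition Pup (r : nat) pi (k : nat) (f : {set 'I_n} -> R) (J : {set 'I_n}) : R :=
  \sum_(I in Mk pi k | J \subset I) wgt r pi I / wgt r pi J * f I.

End SLC.

(* Main.v *)
Require Import Defs.
From mathcomp Require Import all_boot all_order all_algebra.
From mathcomp Require Import reals exp.
From mathcomp Require Import mpoly.
From mathcomp Require Import ring lra zify.
Import Order.TTheory GRing.Theory Num.Theory.
Set Implicit Arguments. Unset Strict Implicit. Unset Printing Implicit Defensive.
Local Open Scope ring_scope.

Section Poly.
Variables (R : realType) (n : nat).

Definition mS (S : {set 'I_n}) : 'X_{1..n} := (\sum_(i in S) U_(i))%MM.

Lemma mSE (S : {set 'I_n}) i : mS S i = (i \in S).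
Proof.
rewrite /mS mnm_sumE.
under eq_bigr do rewrite mnm1E.
case: (boolP (i \in S)) => iS.
  rewrite (bigD1 i) //= eqxx big1 // => j /andP[_ /negPf]; by rewrite eq_sym => ->.
by rewrite big1 // => j jS; apply/eqP; rewrite eqb0; apply: contraNneq iS => <-.
Qed.

Lemma mS_D1 (S : {set 'I_n}) x : x \in S -> (mS S - U_(x))%MM = mS (S :\ x).
Proof.
move=> xS; apply/mnmP => i; rewrite mnmBE mnm1E !mSE in_setD1.
by case: (eqVneq x i) => [<-|_]; rewrite ?xS //= subn0; case: (i \in S).
Qed.

Lemma mderiv_mS (S : {set 'I_n}) x :
  mderiv x ('X_[mS S] : {mpoly R[n]}) = if x \in S then 'X_[mS (S :\ x)] else 0.
Proof.
rewrite mderivX mSE; case: ifP => xS; last by rewrite scale0r.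
by rewrite scale1r mS_D1.
Qed.

Lemma ev1_X (S : {set 'I_n}) : ev1 ('X_[mS S] : {mpoly R[n]}) = 1.
Proof. by rewrite /ev1 mevalX big1 // => i _; rewrite expr1n. Qed.

Definition hT (c : {set 'I_n} -> R) (T : {set 'I_n}) : {mpoly R[n]} :=
  \sum_(S : {set 'I_n}) (if T \subset S then c S else 0) *: 'X_[mS (S :\: T)].

Lemma mderiv_sum x (I : finType) (F : I -> {mpoly R[n]}) :
  mderiv x (\sum_i F i) = \sum_i mderiv x (F i).
Proof. exact: (big_morph _ (@mderivD _ _ x) (mderiv0 _ _)). Qed.

Lemma mderiv_hT c T x :
  mderiv x (hT c T) = if x \in T then 0 else hT c (x |: T).
Proof.
rewrite /hT mderiv_sum; case: ifP => xT.
  apply: big1 => S _; rewrite mderivZ mderiv_mS in_setD xT /= scaler0 //.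
apply: eq_bigr => S _; rewrite mderivZ mderiv_mS in_setD xT /= subUset sub1set.
case: (boolP (x \in S)) => xS /=; last by rewrite scaler0 scale0r.
by rewrite setDDl setUC.
Qed.

Lemma ev1_hT c T : ev1 (hT c T) = \sum_(S : {set 'I_n} | T \subset S) c S.
Proof.
rewrite /ev1 /hT raddf_sum [RHS]big_mkcond /=; apply: eq_bigr => S _.
by rewrite mevalZ -/(ev1 _) ev1_X mulr1.
Qed.

Lemma foldr_hT c (T : {set 'I_n}) (l : seq 'I_n) : uniq l -> all (fun x => x \notin T) l ->
  foldr (fun i q => mderiv i q) (hT c T) l = hT c (T :|: [set x in l]).
Proof.
elim: l T => [|a l IH] T /=.
  by move=> _ _; congr hT; apply/setP=> x; rewrite !inE orbF.
move=> /andP[al ul] /andP[aT all].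
rewrite IH // mderiv_hT !inE (negPf aT) (negPf al) /=; congr hT.
by apply/setP => x; rewrite !inE; case: (x == a); rewrite ?orbT.
Qed.

Lemma partialJ_gen (pi : {set 'I_n} -> R) K :
  partialJ K (gen_poly pi) = hT pi K.
Proof.
have -> : gen_poly pi = hT pi set0.
  rewrite /gen_poly /hT; apply: eq_bigr => S _; rewrite sub0set setD0.
  by rewrite /mS (big_morph _ (@mpolyXD _ _) (mpolyX0 _ _)).
rewrite /partialJ foldr_hT ?enum_uniq //.
  by congr hT; apply/setP => x; rewrite !inE mem_enum.
by apply/allP => x _; rewrite inE.
Qed.
End Poly.

Section Alg.
Variables (R : realType) (n : nat).

Definition Qf (A : 'I_n -> 'I_n -> R) (u : 'I_n -> R) := \sum_x \sum_y u x * u y * A x y.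
Definition Lf (b u : 'I_n -> R) := \sum_x u x * b x.

Lemma strengthen (A : 'I_n -> 'I_n -> R) (b v : 'I_n -> R) (c : R) (m : nat) :
  0 < c -> (forall x y, A x y = A y x) ->
  (forall x, \sum_y A x y = m.+1%:R * b x) -> \sum_x b x = m.+2%:R * c ->
  (forall u, Qf A u * c <= (Lf b u)^+2) ->
  m.+2%:R * Qf A v * c <= m.+1%:R * (Lf b v)^+2.
Proof.
move=> c0 Asym rows sumb H0.
set t := Lf b v / (m.+2%:R * c).
pose u := fun x => v x - t.
have ev : forall x, v x = u x + t by move=> x; rewrite /u subrK.
have Lu : Lf b u = 0.
  rewrite /Lf; under eq_bigr do rewrite /u mulrBl.
  rewrite sumrB -mulr_sumr sumb -/(Lf b v) /t mulfVK ?subrr //.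
  by rewrite mulf_neq0 ?pnatr_eq0 // gt_eqF.
have Qu : Qf A u <= 0.
  have := H0 u; rewrite Lu expr0n /= => h.
  by rewrite -(pmulr_rle0 _ c0) mulrC.
have rowu : \sum_x \sum_y u x * A x y = 0.
  under eq_bigr do rewrite -mulr_sumr rows mulrCA.
  by rewrite -mulr_sumr -/(Lf b u) Lu mulr0.
have colu : \sum_x \sum_y u y * A x y = 0.
  rewrite exchange_big /=; under eq_bigr do (under eq_bigr do rewrite Asym).
  exact: rowu.
have sA : \sum_x \sum_y A x y = m.+1%:R * (m.+2%:R * c).
  under eq_bigr do rewrite rows.
  by rewrite -mulr_sumr sumb.
have eQ : Qf A v = Qf A u + t * (\sum_x \sum_y u x * A x y) + t * (\sum_x \sum_y u y * A x y)
                  + t ^+ 2 * (\sum_x \sum_y A x y).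
  rewrite /Qf !mulr_sumr -!big_split /=; apply: eq_bigr => x _.
  rewrite !mulr_sumr -!big_split /=; apply: eq_bigr => y _.
  rewrite !ev; ring.
rewrite eQ rowu colu sA !mulr0 !addr0.
have tE : Lf b v = t * (m.+2%:R * c).
  by rewrite /t mulfVK // mulf_neq0 ?pnatr_eq0 // gt_eqF.
rewrite tE.
have h1 : m.+2%:R * Qf A u * c <= 0.
  by rewrite -mulrA mulr_ge0_le0 ?ler0n // mulr_le0_ge0 // ltW.
have -> : m.+2%:R * (Qf A u + t ^+ 2 * (m.+1%:R * (m.+2%:R * c))) * c
   = m.+2%:R * Qf A u * c + m.+1%:R * (t * (m.+2%:R * c)) ^+ 2 by ring.
lra.
Qed.
End Alg.

Section Comb.
Variables (R : realType) (n r : nat) (pi : {set 'I_n} -> R).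
Hypothesis pi_ge0 : forall S, 0 <= pi S.
Hypothesis hom : homogeneous r pi.
Hypothesis pi_sum : \sum_S pi S = 1.
Hypothesis slc : strongly_log_concave pi.

Definition sp (I : {set 'I_n}) : R := \sum_(B : {set 'I_n} | I \subset B) pi B.
Local Notation w := (wgt r pi).
Implicit Types (I J K S B : {set 'I_n}) (x y : 'I_n).

Lemma wE I : w I = (r - #|I|)`!%:R * sp I.
Proof. by []. Qed.

Lemma sp_ge0 I : 0 <= sp I.
Proof. by apply: sumr_ge0. Qed.

Lemma w_ge0 I : 0 <= w I.
Proof. by rewrite wE mulr_ge0 ?sp_ge0. Qed.

Lemma sp_mono I J : I \subset J -> sp J <= sp I.
Proof.
move=> IJ; rewrite /sp [leRHS](bigID (fun B : {set 'I_n} => J \subset B)) /=.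
have -> : \sum_(B : {set 'I_n} | (I \subset B) && (J \subset B)) pi B = sp J.
  by apply: eq_bigl => B; case: (boolP (J \subset B)) => JB; rewrite ?andbF // andbT (subset_trans IJ JB).
by rewrite lerDl sumr_ge0.
Qed.

Lemma sp_eq0 I : ~~ indep pi I -> sp I = 0.
Proof.
move=> nI; apply: big1 => B IB; apply/eqP; rewrite eq_le pi_ge0 andbT.
rewrite leNgt; apply: contra nI => pB; apply/existsP; exists B; by rewrite pB.
Qed.

Lemma w_eq0 I : ~~ indep pi I -> w I = 0.
Proof. by move=> nI; rewrite wE sp_eq0 // mulr0. Qed.

Lemma sp_gt0 I : indep pi I -> 0 < sp I.
Proof.
case/existsP => B /andP[pB IB]; apply: (lt_le_trans pB).
rewrite /sp (bigD1 B) //= lerDl sumr_ge0 //.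
Qed.

Lemma w_gt0 I : indep pi I -> 0 < w I.
Proof. by move=> iI; rewrite wE mulr_gt0 ?sp_gt0 // ltr0n fact_gt0. Qed.

Lemma lemS (J : {set 'I_n}) : (#|J| <= r)%N ->
  \sum_(y : 'I_n | y \notin J) sp (y |: J) = (r - #|J|)%:R * sp J.
Proof.
move=> Jr; rewrite /sp (exchange_big_dep (fun B => J \subset B)) /=; last first.
  by move=> y B _; rewrite subUset => /andP[].
rewrite mulr_sumr; apply: eq_bigr => B JB.
rewrite sumr_const.
case: (eqVneq (pi B) 0) => [->|pB]; first by rewrite mul0rn mulr0.
rewrite mulr_natl; congr (_ *+ _).
rewrite -(hom pB); have -> : #|J| = #|B :&: J| by rewrite (setIidPr JB).
rewrite -cardsD; apply: eq_card => y; rewrite !inE -topredE /= subUset sub1set JB andbT.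
by [].
Qed.

Lemma F1 J : (#|J| < r)%N -> \sum_(y : 'I_n | y \notin J) w (y |: J) = w J.
Proof.
move=> Jr.
have [m em] : exists m, (r - #|J|)%N = m.+1.
  by exists (r - #|J|).-1; rewrite prednK // subn_gt0.
have -> : \sum_(y : 'I_n | y \notin J) w (y |: J) =
          \sum_(y : 'I_n | y \notin J) m`!%:R * sp (y |: J).
  apply: eq_bigr => y yJ; rewrite wE cardsU1 yJ add1n subnS em.
  by rewrite succnK.
rewrite -mulr_sumr lemS; last exact: ltnW.
by rewrite mulrA -natrM em [RHS]wE em mulnC -factS.
Qed.

Lemma ext_sum (m : nat) x (F : {set 'I_n} -> R) :
  \sum_(K : {set 'I_n} | (#|K| == m) && (x \notin K)) F (x |: K) =
  \sum_(J : {set 'I_n} | (#|J| == m.+1) && (x \in J)) F J.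
Proof.
rewrite [RHS](reindex_onto (fun K => x |: K) (fun J => J :\ x)) /=; last first.
  by move=> J /andP[_ xJ]; rewrite setD1K.
apply: eq_bigl => K; rewrite setU11 andbT.
case: (boolP (x \in K)) => xK /=.
  rewrite andbF; apply/esym/negbTE; apply/negP => /andP[_ /eqP eK].
  by move: xK; rewrite -eK !inE eqxx.
by rewrite cardsU1 xK add1n eqSS setU1K // eqxx andbT.
Qed.

Lemma DC (m : nat) (F : {set 'I_n} -> R) :
  \sum_(K : {set 'I_n} | #|K| == m) \sum_(y : 'I_n | y \notin K) F (y |: K) =
  m.+1%:R * \sum_(I : {set 'I_n} | #|I| == m.+1) F I.
Proof.
rewrite (exchange_big_dep predT) //=.
under eq_bigr do rewrite ext_sum.
rewrite (exchange_big_dep (fun I : {set 'I_n} => #|I| == m.+1)) /=; last by move=> y I _ /andP[].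
rewrite mulr_sumr; apply: eq_bigr => I /eqP cI.
rewrite sumr_const mulr_natl; congr (_ *+ _).
by rewrite -[in RHS]cI; apply: eq_card => y; rewrite -topredE /= cI eqxx.
Qed.

Lemma EXT1 J (F : {set 'I_n} -> R) :
  \sum_(I : {set 'I_n} | (#|I| == #|J|.+1) && (J \subset I)) F I =
  \sum_(y : 'I_n | y \notin J) F (y |: J).
Proof.
have eF : forall y, F (y |: J) = \sum_(I : {set 'I_n} | I == y |: J) F I by move=> y; rewrite big_pred1_eq.
under [RHS]eq_bigr do rewrite eF.
rewrite (exchange_big_dep (fun I : {set 'I_n} => (#|I| == #|J|.+1) && (J \subset I))) /=; last first.
  move=> y I yJ /eqP ->; rewrite cardsU1 yJ add1n eqxx /=.
  by apply/subsetP => z zJ; rewrite !inE zJ orbT.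
apply: eq_bigr => I /andP[/eqP cI JI].
have : #|I :\: J| == 1%N.
  by rewrite cardsD (setIidPr JI) cI subSn // subnn.
case/cards1P => z eIz.
have zI : z \in I :\: J by rewrite eIz set11.
rewrite (eq_bigl (pred1 z)) ?big_pred1_eq // => y /=.
apply/idP/idP.
  case/andP => yJ /eqP eI.
  have : y \in I :\: J by rewrite eI !inE eqxx yJ.
  by rewrite eIz inE.
move/eqP ->; move: zI; rewrite inE => /andP[zJ zI'].
rewrite zJ /= eq_sym eqEcard cardsU1 zJ add1n cI leqnn andbT.
by rewrite subUset sub1set zI' JI.
Qed.

Lemma M_sum (j : nat) (P : pred {set 'I_n}) (F : {set 'I_n} -> R) :
  \sum_(I in Mk pi j | P I) w I * F I = \sum_(I : {set 'I_n} | (#|I| == j) && P I) w I * F I.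
Proof.
rewrite [RHS](bigID (indep pi)) /= [X in _ + X]big1 ?addr0; last first.
  by move=> I /andP[_ nI]; rewrite w_eq0 // mul0r.
apply: eq_bigl => I; rewrite /Mk inE.
by case: (indep pi I); case: (#|I| == j); case: (P I).
Qed.

Lemma Pup_ext (j : nat) (g : {set 'I_n} -> R) J : #|J|.+1 = j ->
  Pup r pi j g J = \sum_(y : 'I_n | y \notin J) w (y |: J) / w J * g (y |: J).
Proof.
move=> cJ; rewrite /Pup.
have e : forall I, w I / w J * g I = w I * (g I / w J).
  by move=> I; rewrite mulrAC -mulrA.
under eq_bigr do rewrite e.
rewrite M_sum -cJ EXT1; apply: eq_bigr => y _; by rewrite e.
Qed.

Lemma WG (j : nat) (g : {set 'I_n} -> R) J : #|J|.+1 = j ->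
  w J * Pup r pi j g J = \sum_(y : 'I_n | y \notin J) w (y |: J) * g (y |: J).
Proof.
move=> cJ; rewrite Pup_ext // mulr_sumr.
case: (eqVneq (w J) 0) => wJ.
  rewrite wJ [LHS]big1 => [|y _]; last by rewrite mul0r.
  apply: esym; apply: big1 => y yJ.
  have spJ : sp J = 0.
    by move: wJ; rewrite wE => /eqP; rewrite mulf_eq0 pnatr_eq0 (negPf (lt0n_neq0 (fact_gt0 _))) /= => /eqP.
  have : sp (y |: J) = 0.
    apply/eqP; rewrite eq_le sp_ge0 andbT -spJ; apply: sp_mono.
    by apply/subsetP => z zJ; rewrite !inE zJ orbT.
  by rewrite wE => ->; rewrite mulr0 mul0r.
apply: eq_bigr => y _; by rewrite mulrA mulrCA divff // mulr1.
Qed.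

Lemma Pup_ge0 (j : nat) (g : {set 'I_n} -> R) J :
  (forall I, I \in Mk pi j -> 0 <= g I) -> 0 <= Pup r pi j g J.
Proof.
move=> g0; apply: sumr_ge0 => I /andP[IM _].
by rewrite mulr_ge0 ?divr_ge0 ?w_ge0 ?g0.
Qed.

Lemma wg_ge0 (j : nat) (g : {set 'I_n} -> R) I :
  (forall I, I \in Mk pi j -> 0 <= g I) -> #|I| = j -> 0 <= w I * g I.
Proof.
move=> g0 cI; case: (boolP (indep pi I)) => iI; last by rewrite w_eq0 // mul0r.
by rewrite mulr_ge0 ?w_ge0 // g0 // /Mk inE iI cI eqxx.
Qed.

Definition Zs (j : nat) := \sum_(I : {set 'I_n} | #|I| == j) w I.
Definition Ej (j : nat) (g : {set 'I_n} -> R) := \sum_(I : {set 'I_n} | #|I| == j) w I * xlogx (g I).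
Definition mj (j : nat) (g : {set 'I_n} -> R) := \sum_(I : {set 'I_n} | #|I| == j) w I * g I.

Lemma Zs_S (j : nat) : (j < r)%N -> Zs j = j.+1%:R * Zs j.+1.
Proof.
move=> jr; rewrite /Zs -DC; apply: eq_bigr => J /eqP cJ.
by rewrite F1 // cJ.
Qed.

Lemma mj_S (j : nat) g : (j < r)%N -> mj j (Pup r pi j.+1 g) = j.+1%:R * mj j.+1 g.
Proof.
move=> jr; rewrite /mj -DC; apply: eq_bigr => J /eqP cJ.
by rewrite WG // cJ.
Qed.

Lemma pikE (j : nat) I : pik r pi j I = w I / Zs j.
Proof.
rewrite /pik /Zs; congr (_ / _).
transitivity (\sum_(I in Mk pi j | predT I) w I * 1).
  by apply: eq_big => [J|J _]; rewrite ?andbT ?mulr1.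
rewrite M_sum; apply: eq_big => [J|J _]; by rewrite ?andbT ?mulr1.
Qed.

Lemma EntE (j : nat) g :
  Ent (Mk pi j) (pik r pi j) g = (Zs j)^-1 * Ej j g - xlogx ((Zs j)^-1 * mj j g).
Proof.
rewrite /Ent /Ej /mj !mulr_sumr.
have e : forall (F : {set 'I_n} -> R) ,
   \sum_(I in Mk pi j) pik r pi j I * F I = \sum_(I : {set 'I_n} | #|I| == j) (Zs j)^-1 * (w I * F I).
  move=> F; transitivity (\sum_(I in Mk pi j | predT I) w I * (F I / Zs j)).
    apply: eq_big => [I|I _]; first by rewrite andbT.
    by rewrite pikE mulrAC -mulrA.
  rewrite M_sum; apply: eq_big => [I|I _]; first by rewrite andbT.
  by rewrite mulrA mulrC.
by rewrite !e.
Qed.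

Lemma ev0 K : ev1 (partialJ K (gen_poly pi)) = sp K.
Proof. by rewrite partialJ_gen ev1_hT. Qed.

Definition bv K x := if x \in K then 0 else sp (x |: K).
Lemma ev1d x K : ev1 (mderiv x (partialJ K (gen_poly pi))) = bv K x.
Proof.
rewrite /bv.
rewrite partialJ_gen mderiv_hT; case: ifP => _; last by rewrite ev1_hT.
by rewrite /ev1 meval0.
Qed.

Definition Am K x y := if (x \notin K) && (y \notin x |: K) then sp (y |: (x |: K)) else 0.
Lemma ev2d x y K : ev1 (mderiv x (mderiv y (partialJ K (gen_poly pi)))) = Am K x y.
Proof.
rewrite /Am partialJ_gen (mderiv_hT _ _ y); case: ifP => yK.
  rewrite mderiv0 /ev1 meval0 !inE yK orbT andbF //.
rewrite mderiv_hT; case: ifP => xyK.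
  rewrite /ev1 meval0; move: xyK; rewrite !inE => /orP[/eqP ->|->]; by rewrite ?eqxx ?andbF.
rewrite ev1_hT; move: xyK; rewrite !inE yK => /negbT; rewrite negb_or => /andP[xy xK].
by rewrite xK eq_sym (negPf xy) /= setUCA.
Qed.

Lemma Am_sym K x y : Am K x y = Am K y x.
Proof.
rewrite /Am !inE setUCA; congr (if _ then _ else _).
by rewrite eq_sym; case: (x \in K); case: (y \in K); rewrite ?andbF //= ?orbF ?orbT ?andbT.
Qed.

Lemma nsd_ineq K u : 0 < sp K -> Qf (Am K) u * sp K <= (Lf (bv K) u)^+2.
Proof.
move=> c0.
have p0 : 0 < ev1 (partialJ K (gen_poly pi)) by rewrite ev0.
move: (slc p0 u); rewrite /hess_log1 ev0.
under eq_bigr do under eq_bigr do rewrite ev2d !ev1d.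
move: c0; move: (sp K) => c c0.
have E : \sum_i \sum_j u i * u j * (Am K i j / c - bv K i * bv K j / c ^+ 2)
   = (Qf (Am K) u * c - Lf (bv K) u ^+ 2) / c ^+ 2.
  rewrite /Qf /Lf [X in _ - X]expr2 [X in _ - X]mulr_suml [X in X - _]mulr_suml -sumrB mulr_suml.
  apply: eq_bigr => i _.
  rewrite [X in _ - X]mulr_sumr [X in X - _]mulr_suml -sumrB mulr_suml; apply: eq_bigr => j _.
  field; by rewrite gt_eqF.
rewrite E => h; rewrite -subr_le0.
by move: h; rewrite pmulr_lle0 // invr_gt0 exprn_gt0.
Qed.

Lemma lorentz_w K (v : 'I_n -> R) : (#|K|.+2 <= r)%N -> 0 < w K ->
  (\sum_(x : 'I_n | x \notin K) \sum_(y : 'I_n | y \notin x |: K) w (y |: (x |: K)) * (v x * v y)) * w K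
  <= (\sum_(x : 'I_n | x \notin K) w (x |: K) * v x)^+2.
Proof.
move=> Kr wK0.
have c0 : 0 < sp K by move: wK0; rewrite wE pmulr_rgt0 // ltr0n fact_gt0.
have [m er] : exists m, (r - #|K| = m.+2)%N.
  exists (r - #|K| - 2)%N; lia.
have rows : forall x, \sum_y Am K x y = m.+1%:R * bv K x.
  move=> x; rewrite /Am /bv; case: (boolP (x \in K)) => xK /=.
    by rewrite mulr0 big1.
  rewrite -big_mkcond /= lemS; last by rewrite cardsU1 xK add1n; exact: ltnW.
  by rewrite cardsU1 xK add1n subnS er.
have sumb : \sum_x bv K x = m.+2%:R * sp K.
  rewrite -er -lemS; last by rewrite ltnW // ltnW.
  rewrite [RHS]big_mkcond; apply: eq_bigr => x _; rewrite /bv.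
  by case: (x \in K).
have := strengthen v c0 (@Am_sym K) rows sumb (fun u => nsd_ineq u c0).
have eQ : \sum_(x : 'I_n | x \notin K) \sum_(y : 'I_n | y \notin x |: K) w (y |: (x |: K)) * (v x * v y)
          = m`!%:R * Qf (Am K) v.
  rewrite /Qf mulr_sumr [LHS]big_mkcond; apply: eq_bigr => x _.
  case: (boolP (x \in K)) => xK /=.
    by rewrite big1 ?mulr0 // => y _; rewrite /Am xK /= mulr0.
  rewrite mulr_sumr [LHS]big_mkcond; apply: eq_bigr => y _; rewrite /Am xK /=.
  case: ifP => yK /=; last by rewrite !mulr0.
  rewrite wE cardsU1 yK cardsU1 xK !add1n subnS subnS er /=.
  ring.
have eL : \sum_(x : 'I_n | x \notin K) w (x |: K) * v x = m.+1`!%:R * Lf (bv K) v.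
  rewrite /Lf mulr_sumr [LHS]big_mkcond; apply: eq_bigr => x _; rewrite /bv.
  case: (boolP (x \in K)) => xK /=; first by rewrite !mulr0.
  rewrite wE cardsU1 xK add1n subnS er /=; ring.
rewrite eQ eL [w K]wE er => h.
set Q := Qf (Am K) v in h *; set L := Lf (bv K) v in h *.
have a0 : 0 <= m`!%:R ^+ 2 * m.+1%:R :> R by rewrite mulr_ge0 ?exprn_ge0 ?ler0n.
have h2 := ler_wpM2l a0 h.
rewrite !factS !natrM.
set a := (m`!%:R : R) in h2 *.
have E1 : a * Q * (m.+2%:R * (m.+1%:R * a) * sp K) = a ^+ 2 * m.+1%:R * (m.+2%:R * Q * sp K) by ring.
have E2 : (m.+1%:R * a * L) ^+ 2 = a ^+ 2 * m.+1%:R * (m.+1%:R * L ^+ 2) by ring.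
by rewrite E1 E2.
Qed.

Lemma xlogxE (x : R) : xlogx x = x * ln x.
Proof. by rewrite /xlogx; case: eqP => [->|]; rewrite ?mul0r. Qed.

Lemma LNI (a b : R) : 0 < a -> 0 < b -> 0 <= a * ln a - a * ln b - a + b.
Proof.
move=> a0 b0.
have h : ln (1 + (b / a - 1)) <= b / a - 1.
  apply: le_ln1Dx; have := divr_gt0 b0 a0; lra.
rewrite addrC subrK ln_div ?posrE // in h.
have h2 := ler_wpM2l (ltW a0) h.
rewrite mulrBr mulrBr mulrCA divff ?gt_eqF // mulr1 mulr1 in h2.
lra.
Qed.

Definition S3 (i : nat) (phi : {set 'I_n} -> 'I_n -> 'I_n -> R) :=
  \sum_(K : {set 'I_n} | #|K| == i) \sum_(x : 'I_n | x \notin K) \sum_(y : 'I_n | y \notin x |: K) phi K x y.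

Lemma S3D i phi psi : S3 i (fun K x y => phi K x y + psi K x y) = S3 i phi + S3 i psi.
Proof.
rewrite /S3 -big_split /=; apply: eq_bigr => K _; rewrite -big_split /=.
by apply: eq_bigr => x _; rewrite -big_split.
Qed.

Lemma S3N i phi : S3 i (fun K x y => - phi K x y) = - S3 i phi.
Proof.
rewrite /S3 -sumrN; apply: eq_bigr => K _; rewrite -sumrN.
by apply: eq_bigr => x _; rewrite -sumrN.
Qed.

Lemma S3_ext i phi psi : (forall K x y, phi K x y = psi K x y) -> S3 i phi = S3 i psi.
Proof.
move=> e; rewrite /S3; apply: eq_bigr => K _; apply: eq_bigr => x _.
by apply: eq_bigr => y _.
Qed.

Lemma S3_le i phi psi :
  (forall K x y, #|K| = i -> x \notin K -> y \notin x |: K -> phi K x y <= psi K x y) ->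
  S3 i phi <= S3 i psi.
Proof.
move=> e; rewrite /S3; apply: ler_sum => K /eqP cK; apply: ler_sum => x xK.
by apply: ler_sum => y yK; apply: e.
Qed.

Lemma pair_cond (P : pred 'I_n) (Q : 'I_n -> pred 'I_n) (F : 'I_n -> 'I_n -> R) :
  \sum_(x | P x) \sum_(y | Q x y) F x y = \sum_x \sum_y (if P x && Q x y then F x y else 0).
Proof.
rewrite big_mkcond; apply: eq_bigr => x _; case: (P x) => /=; last by rewrite big1.
by rewrite big_mkcond.
Qed.

Lemma swapxy K (F : 'I_n -> 'I_n -> R) :
  \sum_(x : 'I_n | x \notin K) \sum_(y : 'I_n | y \notin x |: K) F x y =
  \sum_(x : 'I_n | x \notin K) \sum_(y : 'I_n | y \notin x |: K) F y x.
Proof.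
rewrite pair_cond [RHS]pair_cond [LHS]exchange_big /=; apply: eq_bigr => x _; apply: eq_bigr => y _.
congr (if _ then _ else _); rewrite !inE.
by case: (x \in K); case: (y \in K); rewrite ?andbF ?orbT ?orbF //= eq_sym.
Qed.

Lemma indep_sub I J : J \subset I -> indep pi I -> indep pi J.
Proof.
move=> JI /existsP[B /andP[pB IB]]; apply/existsP; exists B.
by rewrite pB (subset_trans JI IB).
Qed.

Lemma sub1U x K : K \subset x |: K.
Proof. by apply/subsetP => z zK; rewrite !inE zK orbT. Qed.

Lemma Pup_lb (j : nat) g J z : (forall I, I \in Mk pi j -> 0 <= g I) -> #|J|.+1 = j -> z \notin J ->
  w (z |: J) / w J * g (z |: J) <= Pup r pi j g J.
Proof.
move=> g0 cJ zJ; rewrite Pup_ext // (bigD1 z) //= lerDl.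
apply: sumr_ge0 => y /andP[yJ _].
rewrite mulrAC divr_ge0 ?w_ge0 // (wg_ge0 g0) //.
by rewrite cardsU1 yJ add1n.
Qed.

Lemma DC2 (i : nat) (Phi : {set 'I_n} -> R) :
  S3 i (fun K x y => Phi (y |: (x |: K))) = (i.+1 * i.+2)%:R * \sum_(I : {set 'I_n} | #|I| == i.+2) Phi I.
Proof.
have e := DC i (fun J => \sum_(y : 'I_n | y \notin J) Phi (y |: J)).
rewrite /S3 e DC natrM mulrA //.
Qed.

Lemma S3_lin6 i (t1 t2 t3 t4 t5 t6 : {set 'I_n} -> 'I_n -> 'I_n -> R) :
  S3 i (fun K x y => t1 K x y - t2 K x y - t3 K x y + t4 K x y - t5 K x y + t6 K x y)
  = S3 i t1 - S3 i t2 - S3 i t3 + S3 i t4 - S3 i t5 + S3 i t6.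
Proof. by rewrite !S3D !S3N. Qed.

Section Level.
Variables (i : nat) (g : {set 'I_n} -> R).
Hypothesis ir : (i.+2 <= r)%N.
Hypothesis g0 : forall I, I \in Mk pi i.+2 -> 0 <= g I.
Local Notation G := (Pup r pi i.+2 g).
Local Notation H := (Pup r pi i.+1 G).

Lemma G_ge0 J : 0 <= G J.
Proof. exact: Pup_ge0. Qed.

Lemma H_ge0 K : 0 <= H K.
Proof. by apply: Pup_ge0 => I _; apply: G_ge0. Qed.

Lemma G0' : forall I, I \in Mk pi i.+1 -> 0 <= G I.
Proof. by move=> I _; apply: G_ge0. Qed.

Lemma WGS K : #|K| = i ->
  \sum_(x : 'I_n | x \notin K) \sum_(y : 'I_n | y \notin x |: K) w (y |: (x |: K)) * g (y |: (x |: K))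
  = w K * H K.
Proof.
move=> cK; rewrite WG ?cK //; apply: eq_bigr => x xK.
by rewrite WG // cardsU1 xK cK.
Qed.

Lemma T1 : S3 i (fun K x y => w (y |: (x |: K)) * xlogx (g (y |: (x |: K))))
   = (i.+1 * i.+2)%:R * Ej i.+2 g.
Proof. by rewrite (DC2 i (fun I => w I * xlogx (g I))). Qed.

Lemma T2 : S3 i (fun K x y => w (y |: (x |: K)) * g (y |: (x |: K)) * ln (G (x |: K)))
   = i.+1%:R * Ej i.+1 G.
Proof.
have e := DC i (fun J => \sum_(y : 'I_n | y \notin J) w (y |: J) * g (y |: J) * ln (G J)).
rewrite /S3 e /Ej; congr (_ * _); apply: eq_bigr => J /eqP cJ.
by rewrite -mulr_suml -(@WG i.+2 g J) ?cJ // xlogxE mulrA.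
Qed.

Lemma T3 : S3 i (fun K x y => w (y |: (x |: K)) * g (y |: (x |: K)) * ln (G (y |: K)))
   = i.+1%:R * Ej i.+1 G.
Proof.
rewrite -T2 /S3; apply: eq_bigr => K _; rewrite swapxy.
by apply: eq_bigr => x _; apply: eq_bigr => y _; rewrite setUCA.
Qed.

Lemma T4 : S3 i (fun K x y => w (y |: (x |: K)) * g (y |: (x |: K)) * ln (H K)) = Ej i H.
Proof.
rewrite /S3 /Ej; apply: eq_bigr => K /eqP cK.
under eq_bigr do rewrite -mulr_suml.
by rewrite -mulr_suml WGS // xlogxE mulrA.
Qed.

Lemma T5 : S3 i (fun K x y => w (y |: (x |: K)) * g (y |: (x |: K))) = mj i H.
Proof. by rewrite /S3 /mj; apply: eq_bigr => K /eqP cK; rewrite WGS. Qed.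


Lemma T6 : S3 i (fun K x y => w (y |: (x |: K)) * (G (x |: K) * G (y |: K) / H K)) <= mj i H.
Proof.
rewrite /S3 /mj; apply: ler_sum => K /eqP cK.
under eq_bigr do under eq_bigr do rewrite mulrA.
under eq_bigr do rewrite -mulr_suml.
rewrite -mulr_suml.
set Q := \sum_(x : 'I_n | x \notin K) _.
have [HK0|HKn0] := eqVneq (H K) 0.
  by rewrite HK0 invr0 !mulr0.
have HK : 0 < H K by rewrite lt_neqAle eq_sym HKn0 H_ge0.
have [wK0|wKn0] := eqVneq (w K) 0.
  move: HKn0; rewrite Pup_ext ?cK // big1 ?eqxx // => z _.
  by rewrite wK0 invr0 mulr0 mul0r.
have wK : 0 < w K by rewrite lt_neqAle eq_sym wKn0 w_ge0.
have Kr : (#|K|.+2 <= r)%N by rewrite cK.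
have h := lorentz_w (fun z => G (z |: K)) Kr wK.

rewrite -/Q -(@WG i.+1 G K) ?cK // in h.
have e : (w K * H K)^+2 = (w K * H K * H K) * w K by ring.
by rewrite e ler_pM2r // in h; rewrite ler_pdivrMr.
Qed.



Lemma PT K x y : #|K| = i -> x \notin K -> y \notin x |: K ->
  0 <= w (y |: (x |: K)) * xlogx (g (y |: (x |: K)))
     - w (y |: (x |: K)) * g (y |: (x |: K)) * ln (G (x |: K))
     - w (y |: (x |: K)) * g (y |: (x |: K)) * ln (G (y |: K))
     + w (y |: (x |: K)) * g (y |: (x |: K)) * ln (H K)
     - w (y |: (x |: K)) * g (y |: (x |: K))
     + w (y |: (x |: K)) * (G (x |: K) * G (y |: K) / H K).
Proof.
move=> cK xK yxK.
set I := y |: (x |: K).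
have cxK : #|x |: K| = i.+1 by rewrite cardsU1 xK cK.
have cI : #|I| = i.+2 by rewrite /I cardsU1 yxK cxK.
have yxK' := yxK.
move: yxK; rewrite !inE negb_or => /andP[yx yK].
have xyK : x \notin y |: K by rewrite !inE negb_or xK andbT eq_sym.
have cyK : #|y |: K| = i.+1 by rewrite cardsU1 yK cK.
have eI : x |: (y |: K) = I by rewrite /I setUCA.
have [wI0|wIn0] := eqVneq (w I) 0.
  rewrite wI0 !mul0r; lra.
have wI : 0 < w I by rewrite lt_neqAle eq_sym wIn0 w_ge0.
have iI : indep pi I by apply: contraNT wIn0 => /w_eq0 ->.
have gI0 : 0 <= g I by apply: g0; rewrite /Mk inE iI cI eqxx.
have Gx0 := G_ge0 (x |: K); have Gy0 := G_ge0 (y |: K); have H0 := H_ge0 K.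
have [ga0|gan0] := eqVneq (g I) 0.
  rewrite ga0 /xlogx eqxx !mulr0 !mul0r !subr0 !addr0 add0r.
  by rewrite mulr_ge0 ?w_ge0 // divr_ge0 // mulr_ge0.
have ga : 0 < g I by rewrite lt_neqAle eq_sym gan0 gI0.
have wxK : 0 < w (x |: K).
  by apply: w_gt0; apply: indep_sub iI; rewrite /I sub1U.
have wyK : 0 < w (y |: K).
  by apply: w_gt0; apply: indep_sub iI; rewrite -eI sub1U.
have wK : 0 < w K.
  by apply: w_gt0; apply: (indep_sub (sub1U x K)); apply: indep_sub iI; rewrite /I sub1U.
have Gx : 0 < G (x |: K).
  apply: lt_le_trans (Pup_lb g0 (_ : #|x |: K|.+1 = i.+2) yxK'); last by rewrite cxK.
  by rewrite mulr_gt0 // divr_gt0.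
have Gy : 0 < G (y |: K).
  apply: lt_le_trans (Pup_lb g0 (_ : #|y |: K|.+1 = i.+2) xyK); last by rewrite cyK.
  by rewrite eI mulr_gt0 // divr_gt0.
have HK : 0 < H K.
  apply: lt_le_trans (Pup_lb G0' (_ : #|K|.+1 = i.+1) xK); last by rewrite cK.
  by rewrite mulr_gt0 // divr_gt0.
set b := G (x |: K) * G (y |: K) / H K.
have bpos : 0 < b by rewrite /b divr_gt0 // mulr_gt0.
have lnb : ln b = ln (G (x |: K)) + ln (G (y |: K)) - ln (H K).
  by rewrite /b ln_div ?posrE ?mulr_gt0 // lnM ?posrE.
have := LNI ga bpos; rewrite xlogxE.
have -> : w I * (g I * ln (g I)) - w I * g I * ln (G (x |: K)) - w I * g I * ln (G (y |: K)) +
   w I * g I * ln (H K) - w I * g I + w I * b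
   = w I * (g I * ln (g I) - g I * ln b - g I + b) by rewrite lnb; ring.
by move=> h; rewrite mulr_ge0 // ltW.
Qed.



Lemma KI : 2%:R * (i.+1%:R * Ej i.+1 G) <= (i.+1 * i.+2)%:R * Ej i.+2 g + Ej i H.
Proof.
pose t1 := fun K x y => w (y |: (x |: K)) * xlogx (g (y |: (x |: K))).
pose t2 := fun K x y => w (y |: (x |: K)) * g (y |: (x |: K)) * ln (G (x |: K)).
pose t3 := fun K x y => w (y |: (x |: K)) * g (y |: (x |: K)) * ln (G (y |: K)).
pose t4 := fun K x y => w (y |: (x |: K)) * g (y |: (x |: K)) * ln (H K).
pose t5 := fun K x y => w (y |: (x |: K)) * g (y |: (x |: K)).
pose t6 := fun K x y => w (y |: (x |: K)) * (G (x |: K) * G (y |: K) / H K).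
have P : 0 <= S3 i (fun K x y => t1 K x y - t2 K x y - t3 K x y + t4 K x y - t5 K x y + t6 K x y).
  rewrite /S3; apply: sumr_ge0 => K /eqP cK; apply: sumr_ge0 => x xK; apply: sumr_ge0 => y yK.
  exact: PT.
rewrite S3_lin6 in P.
have e1 : S3 i t1 = (i.+1 * i.+2)%:R * Ej i.+2 g by exact: T1.
have e2 : S3 i t2 = i.+1%:R * Ej i.+1 G by exact: T2.
have e3 : S3 i t3 = i.+1%:R * Ej i.+1 G by exact: T3.
have e4 : S3 i t4 = Ej i H by exact: T4.
have e5 : S3 i t5 = mj i H by exact: T5.
have e6 : S3 i t6 <= mj i H by exact: T6.
rewrite e1 e2 e3 e4 e5 in P.
lra.
Qed.
End Level.

Lemma Zs0 : Zs 0 = r`!%:R.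
Proof.
rewrite /Zs (eq_bigl (pred1 set0)) ?big_pred1_eq; last by move=> I; rewrite cards_eq0.
rewrite wE cards0 subn0 /sp.
rewrite (eq_bigl predT) ?pi_sum ?mulr1 // => B; by rewrite sub0set.
Qed.

Lemma Zs_gt0 (j : nat) : (j <= r)%N -> 0 < Zs j.
Proof.
elim: j => [|j IH] jr; first by rewrite Zs0 ltr0n fact_gt0.
have := IH (ltnW jr); rewrite Zs_S //.
by rewrite pmulr_rgt0 // ltr0n.
Qed.

Lemma LL (i : nat) g : (i.+2 <= r)%N -> (forall I, I \in Mk pi i.+2 -> 0 <= g I) ->
  2%:R * Ent (Mk pi i.+1) (pik r pi i.+1) (Pup r pi i.+2 g)
  <= Ent (Mk pi i.+2) (pik r pi i.+2) g
     + Ent (Mk pi i) (pik r pi i) (Pup r pi i.+1 (Pup r pi i.+2 g)).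
Proof.
move=> ir g0.
have K := KI ir g0.
rewrite !EntE (Zs_S (j := i)) ?(ltnW ir) // (Zs_S (j := i.+1)) //.
rewrite (mj_S (j := i)) ?(ltnW ir) // (mj_S (j := i.+1)) //.
have Z2 := Zs_gt0 ir.
move: K Z2.
move: (Ej i.+1 _) (Ej i.+2 _) (Ej i _) (Zs i.+2) (mj i.+2 g) => E1 E2 E0 Z m K Z0.
rewrite natrM in K.
have a1p : 0 < i.+1%:R :> R by rewrite ltr0n.
have a2p : 0 < i.+2%:R :> R by rewrite ltr0n.
move: (i.+1%:R) (i.+2%:R) a1p a2p K => a1 a2 a1p a2p K.
have e1 : (a2 * Z)^-1 * (a2 * m) = Z^-1 * m.
  by field; rewrite !gt_eqF.
have e0 : (a1 * (a2 * Z))^-1 * (a1 * (a2 * m)) = Z^-1 * m.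
  by field; rewrite !gt_eqF.
rewrite e1 e0.
set X := xlogx _.
set c := (a1 * a2 * Z)^-1.
have c0 : 0 <= c by rewrite /c invr_ge0 !mulr_ge0 // ltW.
have -> : (a2 * Z)^-1 = c * a1.
  by rewrite /c; field; rewrite !gt_eqF.
have -> : (a1 * (a2 * Z))^-1 = c.
  by rewrite /c mulrA.
have -> : Z^-1 = c * (a1 * a2).
  by rewrite /c; field; rewrite !gt_eqF.
rewrite -subr_ge0.
have -> : c * (a1 * a2) * E2 - X + (c * E0 - X) - 2%:R * (c * a1 * E1 - X)
   = c * (a1 * a2 * E2 + E0 - 2%:R * (a1 * E1)) by ring.
by rewrite mulr_ge0 // subr_ge0.
Qed.

Lemma Ent0 g : Ent (Mk pi 0) (pik r pi 0) g = 0.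
Proof.
rewrite EntE.
have e : forall F : {set 'I_n} -> R, \sum_(I : {set 'I_n} | #|I| == 0%N) F I = F set0.
  by move=> F; rewrite (eq_bigl (pred1 set0)) ?big_pred1_eq // => I; rewrite cards_eq0.
have Z0 : Zs 0 = w set0 by rewrite /Zs e.
rewrite /Ej /mj !e -Z0 !mulrA mulVf ?mul1r ?subrr //.
by rewrite gt_eqF // Zs_gt0.
Qed.
End Comb.

Lemma tele (R : realType) (e : nat -> R) (k : nat) : e 0%N = 0 ->
  (forall i, (i.+2 <= k)%N -> 2%:R * e i.+1 <= e i.+2 + e i) ->
  forall j, (j.+1 <= k)%N -> j.+1%:R * e j <= j%:R * e j.+1.
Proof.
move=> e0 h; elim => [|j IH] jk; first by rewrite e0 !mulr0 mul0r.
have := IH (ltnW jk); have := h j jk.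
rewrite -[j.+2]addn2 -[j.+1]addn1 !natrD.
move=> h1 h2.
have h3 := ler_wpM2l (_ : 0 <= j%:R + 1) h1.
have j0 : 0 <= j%:R :> R by rewrite ler0n.
nra.
Qed.

Theorem lemma4p3 (R : realType) (n r k : nat) (pi : {set 'I_n} -> R)
  (f : {set 'I_n} -> R) :
  is_distribution pi ->
  homogeneous r pi ->
  strongly_log_concave pi ->
  (2 <= k)%N -> (k <= r)%N ->
  (forall I, I \in Mk pi k -> 0 <= f I) ->
  (k%:R / (k.-1)%:R) * Ent (Mk pi k.-1) (pik r pi k.-1) (Pup r pi k f)
    <= Ent (Mk pi k) (pik r pi k) f.
Proof.
case=> pi0 pis hom slc k2 kr f0.
pose down := fix down (d : nat) : {set 'I_n} -> R :=
  if d is d'.+1 then Pup r pi (k - d') (down d') else f.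
have downS : forall d, down d.+1 = Pup r pi (k - d) (down d) by [].
have down0 : down 0%N = f by [].
have down_ge0 : forall d I, I \in Mk pi (k - d) -> 0 <= down d I.
  elim=> [|d IH] I.
    by rewrite subn0 down0; exact: f0.
  by move=> _; rewrite downS; apply: (@Pup_ge0 R n r pi pi0) => J HJ; exact: IH.
pose e := fun j => Ent (Mk pi j) (pik r pi j) (down (k - j)%N).
have e0 : e 0%N = 0 by rewrite /e; exact: (Ent0 pi0 hom pis).
have hL : forall i, (i.+2 <= k)%N -> 2%:R * e i.+1 <= e i.+2 + e i.
  move=> i ik; rewrite /e.
  have d1 : (k - i.+1 = (k - i.+2).+1)%N by lia.
  have d0 : (k - i = (k - i.+2).+2)%N by lia.
  have d2 : (k - (k - i.+2) = i.+2)%N by lia.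
  have d3 : (k - (k - i.+2).+1 = i.+1)%N by lia.
  rewrite d1 d0 !downS d2 d3.
  apply: (LL pi0 hom pis slc); first by apply: leq_trans ik kr.
  by move=> I HI; apply: down_ge0; rewrite d2.
have hk : (k.-1.+1 <= k)%N by lia.
have := tele e0 hL hk; rewrite prednK; last by lia.
rewrite /e subnn down0.
have -> : (k - k.-1 = 1)%N by lia.
rewrite downS subn0 => h.
have k1 : 0 < k.-1%:R :> R by rewrite ltr0n; lia.
rewrite mulrAC ler_pdivrMr // [X in _ <= X]mulrC; by rewrite down0 in h.
Qed.
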